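(* Let $N\ge1$, $i\in\langle N\rangle$ and let $u$ be a word over $\langle N\rangle$ with $|u|\ge2$. Then the antipode of the right Lagrange Hopf algebra $\mathcal R^N$ satisfies \[ S_{\mathcal R}(Y_u^i)=\sum_{T\in\mathbf{RT}_u^i}(-1)^{\mathbf v(T)}\,\Lambda_{\downarrow r}(T). \]
   Context: Let $\langle N\rangle=\{1,\dots,N\}$, $|u|$ the length of a word $u$. The interval partition Hopf algebra $\mathcal H=\mathcal H^N$ is, as an algebra, the free unital associative complex algebra on generators $Y_u^i$ ($i\in\langle N\rangle$, $|u|\ge 2$); set $Y_j^i=\delta_{ij}1$ for letters $i,j$. Its counit $\varepsilon$ is the algebra homomorphism with $\varepsilon(Y_u^i)=0$, and its comultiplication is the algebra homomorphism $\Delta$ with $\Delta(Y_u^i)=\sum_{q=1}^{p}\sum_{(C_1,\dots,C_q)}\sum_{v\in\langle N\rangle^q} Y_{u|C_1}^{v(1)}\cdots Y_{u|C_q}^{v(q)}\otimes Y_v^i$ ($p=|u|$, the middle sum over all partitions of $\{1,\dots,p\}$ into $q$ nonempty consecutive intervals $C_1<\dots<C_q$, $u|C_k$ the subword indexed by $C_k$). It has an antipode $S_{\mathcal H}$. Let $\mathbf t$ be the algebra anti-automorphism of $\mathcal H$ fixing each generator: $\mathbf t(Y_{u_1}^{i_1}\cdots Y_{u_n}^{i_n})=Y_{u_n}^{i_n}\cdots Y_{u_1}^{i_1}$. The right Lagrange Hopf algebra $\mathcal R^N$ is $\mathcal H$ with multiplication $\mathbf t\circ m\circ(\mathbf t\otimes\mathbf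 t)$, comultiplication $(\mathbf t\otimes\mathbf t)\circ\Delta\circ\mathbf t$, the same unit and counit, and antipode $S_{\mathcal R}=\mathbf t S_{\mathcal H}\mathbf t$. Trees: a colored planar tree is a finite rooted tree with linearly ordered children at each vertex and a color $c(x)\in\langle N\rangle$ at each vertex, up to isomorphism. Leaves have no children; a tree is reduced if every non-leaf vertex has at least two children. $\mathbf{RT}_u^i$: reduced colored planar trees with root colored $i$ and leaves, read left to right, colored $u(1),\dots,u(p)$. For a non-leaf $x$ with children $y_1<\dots<y_k$, $Y(x)=Y^{c(x)}_{c(y_1)\cdots c(y_k)}$. $\mathbf v(T)$ = number of non-leaf vertices. $\Lambda_{\downarrow r}(T)=Y(z_1)\cdots Y(z_r)$ where $z_1,\dots,z_r$ are the non-leaf vertices listed in preorder with children visited from left to right (root first; after a vertex, the subtrees of its children are traversed from the leftmost to the rightmost child). *)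

(* Defs.v *)
From HB Require Import structures.
From mathcomp Require Import all_boot all_order all_algebra.
From mathcomp Require Import reals.
From mathcomp Require Import complex.
From Stdlib Require List.
Set Implicit Arguments. Unset Strict Implicit. Unset Printing Implicit Defensive.
Import Order.TTheory GRing.Theory Num.Theory.
Local Open Scope ring_scope.

Section IntervalPartitionHopf.
Variable N : nat.
Variable K : comNzRingType.

(** Letters of the alphabet <N> = {1,...,N} are represented by 'I_N
    (i.e. relabelled 0,...,N-1).  Words are sequences of letters. *)
Definition word := seq 'I_N.

Definition gen := {p : 'I_N * word | (1 < size p.2)%N}.

(** Monomials (words in the generators) = basis of the free algebra H. *)
Definition mon := seq gen.

(** An element of H is represented by a finite formal linear combination of
    monomials; its coefficient on a monomial is obtained by summing. *)
Definition elt := seq (K * mon).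
Definition coef (x : elt) (m : mon) : K := \sum_(p <- x | p.2 == m) p.1.
Definition eqH (x y : elt) : Prop := forall m : mon, coef x m = coef y m.

Definition zeroH : elt := [::].
Definition oneH : elt := [:: (1, [::])].
Definition addH (x y : elt) : elt := x ++ y.
Definition scaleH (c : K) (x : elt) : elt := [seq (c * p.1, p.2) | p <- x].
Definition mulH (x y : elt) : elt :=
  [seq (a.1 * b.1, a.2 ++ b.2) | a <- x, b <- y].
Definition prodH (xs : seq elt) : elt := foldr mulH oneH xs.

(** Y_u^i, with the convention Y_j^i = delta_{ij} 1 for letters j. *)
Definition Yel (i : 'I_N) (u : word) : elt :=
  match insub (i, u) : option gen with
  | Some g => [:: (1, [:: g])]
  | None => if u == [:: i] then oneH else zeroH
  end.

(** Tensor square H (x) H, same representation on pairs of monomials. *)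
Definition elt2 := seq (K * (mon * mon)).
Definition coef2 (x : elt2) (m : mon * mon) : K :=
  \sum_(p <- x | p.2 == m) p.1.
Definition one2 : elt2 := [:: (1, ([::], [::]))].
Definition tens (x y : elt) : elt2 :=
  [seq (a.1 * b.1, (a.2, b.2)) | a <- x, b <- y].
Definition mul2 (x y : elt2) : elt2 :=
  [seq (a.1 * b.1, (a.2.1 ++ b.2.1, a.2.2 ++ b.2.2)) | a <- x, b <- y].

(** All ways of cutting a word into consecutive nonempty intervals
    C_1 < ... < C_q (each interval partition listed exactly once),
    given as the list of subwords u|C_1, ..., u|C_q. *)
Fixpoint splits (T : Type) (s : seq T) : seq (seq (seq T)) :=
  match s with
  | [::] => [:: [::]]
  | x :: s' =>
      flatten [seq (match p with
                    | [::] => [:: [:: [:: x]]]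
                    | c :: p' => [:: [:: x] :: p; (x :: c) :: p']
                    end) | p <- splits s']
  end.

Fixpoint allwords (q : nat) : seq word :=
  if q is q'.+1 then [seq i :: w | i <- enum 'I_N, w <- allwords q']
  else [:: [::]].

Definition Delta_gen (g : gen) : elt2 :=
  let i := (val g).1 in let u := (val g).2 in
  flatten [seq flatten [seq tens (prodH [seq Yel vc.1 vc.2 | vc <- zip v cs])
                                 (Yel i v)
                       | v <- allwords (size cs)]
          | cs <- splits u].

Definition Delta (m : mon) : elt2 := foldr mul2 one2 (map Delta_gen m).

Definition epsH (m : mon) : K := if m is [::] then 1 else 0.

(** A linear map H -> H is given by its values on the monomial basis. *)
Definition is_antipode (S : mon -> elt) : Prop :=
  forall m : mon,
    eqH (flatten [seq scaleH p.1 (mulH (S p.2.1) [:: (1, p.2.2)]) | p <- Delta m])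
        (scaleH (epsH m) oneH)
 /\ eqH (flatten [seq scaleH p.1 (mulH [:: (1, p.2.1)] (S p.2.2)) | p <- Delta m])
        (scaleH (epsH m) oneH).

Definition tH (x : elt) : elt := [seq (p.1, rev p.2) | p <- x].

Definition linext (S : mon -> elt) (x : elt) : elt :=
  flatten [seq scaleH p.1 (S p.2) | p <- x].

(** Antipode of the right Lagrange Hopf algebra: S_R = t S_H t. *)
Definition antipodeR (S : mon -> elt) (x : elt) : elt := tH (linext S (tH x)).

Inductive ctree : Type := CNode of 'I_N & seq ctree.

Definition color (T : ctree) : 'I_N := let: CNode c _ := T in c.

Fixpoint leaves (T : ctree) : word :=
  let: CNode c ts := T in
  if ts is [::] then [:: c] else flatten (map leaves ts).

Fixpoint reduced (T : ctree) : bool :=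
  let: CNode c ts := T in
  if ts is [::] then true else ((1 < size ts)%N && all reduced ts).

Fixpoint nvert (T : ctree) : nat :=
  let: CNode c ts := T in
  if ts is [::] then 0%N else (sumn (map nvert ts)).+1.

(** Lambda_{down r}: product of Y(z) over non-leaf vertices in preorder. *)
Fixpoint lambda_dr (T : ctree) : elt :=
  let: CNode c ts := T in
  if ts is [::] then oneH
  else mulH (Yel c (map color ts)) (prodH (map lambda_dr ts)).

Definition inRT (i : 'I_N) (u : word) (T : ctree) : Prop :=
  reduced T /\ color T = i /\ leaves T = u.

Definition enumRT (i : 'I_N) (u : word) (ts : seq ctree) : Prop :=
  List.NoDup ts /\ forall T, List.In T ts <-> inRT i u T.

Definition tree_sum (ts : seq ctree) : elt :=
  flatten [seq scaleH ((-1) ^+ nvert T) (lambda_dr T) | T <- ts].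

End IntervalPartitionHopf.

(* Main.v *)
Require Import Defs.
From HB Require Import structures.
From mathcomp Require Import all_boot all_order all_algebra.
From mathcomp Require Import reals.
From mathcomp Require Import complex.
From mathcomp Require Import zify.
Set Implicit Arguments. Unset Strict Implicit. Unset Printing Implicit Defensive.
Import GRing.Theory.
Local Open Scope ring_scope.
Local Open Scope ring_scope.

Section Is.
Variable K : comNzRingType.

Definition Is (T : Type) (x : seq (K * T)) (f : T -> K) : K :=
  \sum_(p <- x) p.1 * f p.2.

Lemma Is_nil T (f : T -> K) : Is [::] f = 0.
Proof. by rewrite /Is big_nil. Qed.

Lemma Is_cons T (a : K * T) x f : Is (a :: x) f = a.1 * f a.2 + Is x f.
Proof. by rewrite /Is big_cons. Qed.

Lemma Is_cat T (x y : seq (K * T)) f : Is (x ++ y) f = Is x f + Is y f.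
Proof. by rewrite /Is big_cat. Qed.

Lemma Is_flatten T U (s : seq U) (F : U -> seq (K * T)) f :
  Is (flatten [seq F a | a <- s]) f = \sum_(a <- s) Is (F a) f.
Proof. by rewrite /Is big_flatten /= big_map. Qed.

Lemma Is_ext T (x : seq (K * T)) f g : (forall a, f a = g a) -> Is x f = Is x g.
Proof. by move=> H; apply: eq_bigr => p _; rewrite H. Qed.

Lemma Is_ext_in (T : eqType) (x : seq (K * T)) f g :
  (forall a, a \in [seq p.2 | p <- x] -> f a = g a) -> Is x f = Is x g.
Proof.
move=> H; rewrite /Is big_seq [RHS]big_seq; apply: eq_bigr => p px.
by rewrite H //; apply/mapP; exists p.
Qed.

Lemma Is_add T (x : seq (K * T)) f g : Is x (fun a => f a + g a) = Is x f + Is x g.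
Proof. by rewrite /Is -big_split; apply: eq_bigr => p _; rewrite mulrDr. Qed.

Lemma Is_scal T (x : seq (K * T)) c f : Is x (fun a => c * f a) = c * Is x f.
Proof. by rewrite /Is big_distrr; apply: eq_bigr => p _; rewrite mulrCA. Qed.

Lemma Is_zero T (x : seq (K * T)) : Is x (fun _ => 0) = 0.
Proof. by rewrite /Is big1 // => p _; rewrite mulr0. Qed.

Lemma Is_opp T (x : seq (K * T)) f : Is x (fun a => - f a) = - Is x f.
Proof. by rewrite /Is -sumrN; apply: eq_bigr => p _; rewrite mulrN. Qed.

Lemma Is_sum T U (x : seq (K * T)) (s : seq U) (G : U -> T -> K) :
  Is x (fun a => \sum_(j <- s) G j a) = \sum_(j <- s) Is x (G j).
Proof.
rewrite /Is exchange_big /=; apply: eq_bigr => p _; rewrite big_distrr //.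
Qed.

Lemma Is_swap T U (x : seq (K * T)) (y : seq (K * U)) (G : T -> U -> K) :
  Is x (fun a => Is y (fun b => G a b)) = Is y (fun b => Is x (fun a => G a b)).
Proof.
rewrite /Is; under eq_bigr do rewrite big_distrr.
rewrite exchange_big /=; apply: eq_bigr => q _; rewrite big_distrr.
by apply: eq_bigr => p _; rewrite /= mulrCA.
Qed.

Lemma Is_allpairs T U V (x : seq (K * T)) (y : seq (K * U)) (h : T -> U -> V) f :
  Is [seq (a.1 * b.1, h a.2 b.2) | a <- x, b <- y] f
  = Is x (fun a => Is y (fun b => f (h a b))).
Proof.
rewrite /Is big_allpairs_dep /=; apply: eq_bigr => a _; rewrite big_distrr.
by apply: eq_bigr => b _ /=; rewrite mulrA.
Qed.

End Is.

Section Alg.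
Variables (N : nat) (K : comNzRingType).
Local Notation elt := (elt N K).
Local Notation mon := (mon N).
Local Notation gen := (gen N).

Lemma Is_scaleH c (x : elt) f : Is (scaleH c x) f = c * Is x f.
Proof. by rewrite /Is /scaleH big_map big_distrr; apply: eq_bigr => p _; rewrite /= mulrA. Qed.

Lemma Is_mulH (x y : elt) f : Is (mulH x y) f = Is x (fun a => Is y (fun b => f (a ++ b))).
Proof. exact: Is_allpairs. Qed.

Lemma Is_oneH (f : mon -> K) : Is (oneH N K) f = f [::].
Proof. by rewrite /oneH Is_cons Is_nil mul1r addr0. Qed.

Lemma Is_zeroH (f : mon -> K) : Is (zeroH N K) f = 0.
Proof. exact: Is_nil. Qed.

Lemma Is_single (c : K) (m : mon) (f : mon -> K) : Is [:: (c, m)] f = c * f m.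
Proof. by rewrite Is_cons Is_nil addr0. Qed.

Lemma Is_tH (x : elt) f : Is (tH x) f = Is x (fun a => f (rev a)).
Proof. by rewrite /Is /tH big_map. Qed.

Lemma Is_linext (S : mon -> elt) (x : elt) f :
  Is (linext S x) f = Is x (fun a => Is (S a) f).
Proof. by rewrite /linext Is_flatten /Is; apply: eq_bigr => p _; rewrite -/(Is _ _) Is_scaleH. Qed.

Lemma Is_prodH_nil (f : mon -> K) : Is (prodH (N:=N) (K:=K) [::]) f = f [::].
Proof. exact: Is_oneH. Qed.

Lemma Is_prodH_cons (x : elt) (xs : seq elt) f :
  Is (prodH (x :: xs)) f = Is x (fun a => Is (prodH xs) (fun b => f (a ++ b))).
Proof. exact: Is_mulH. Qed.

Lemma Is_prodH_cat (xs ys : seq elt) f :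
  Is (prodH (xs ++ ys)) f = Is (prodH xs) (fun a => Is (prodH ys) (fun b => f (a ++ b))).
Proof.
elim: xs f => [|x xs IH] f /=; first by rewrite Is_prodH_nil.
rewrite !Is_mulH; apply: Is_ext => a; rewrite IH.
by apply: Is_ext => b; apply: Is_ext => c; rewrite catA.
Qed.

Lemma Is_prodH_rcons (xs : seq elt) x f :
  Is (prodH (rcons xs x)) f = Is (prodH xs) (fun a => Is x (fun b => f (a ++ b))).
Proof.
rewrite -cats1 Is_prodH_cat; apply: Is_ext => a; rewrite Is_prodH_cons.
by apply: Is_ext => b; rewrite Is_prodH_nil cats0.
Qed.

Lemma Is_tens (x y : elt) f : Is (tens x y) f = Is x (fun a => Is y (fun b => f (a, b))).
Proof. exact: Is_allpairs. Qed.

Lemma Is_mul2 (x y : elt2 N K) f :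
  Is (mul2 x y) f = Is x (fun a => Is y (fun b => f (a.1 ++ b.1, a.2 ++ b.2))).
Proof. exact: Is_allpairs. Qed.

Lemma Is_one2 (f : mon * mon -> K) : Is (one2 N K) f = f ([::], [::]).
Proof. by rewrite /one2 Is_cons Is_nil addr0 mul1r. Qed.

Lemma Is_uniqW (x : elt) (W : seq mon) f : uniq W -> {subset [seq p.2 | p <- x] <= W} ->
  Is x f = \sum_(w <- W) coef x w * f w.
Proof.
move=> uW sub; rewrite /coef.
under [RHS]eq_bigr do rewrite big_distrl /=.
rewrite (exchange_big_dep xpredT) //= /Is [LHS]big_seq [RHS]big_seq; apply: eq_bigr => p px.
rewrite -big_filter (eq_filter (a2 := pred1 p.2)); last by move=> w; rewrite /= eq_sym.
rewrite filter_pred1_uniq ?big_seq1 //. all: try (apply: sub; apply/mapP; exists p => //).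
Qed.

Lemma eqH_Is (x y : elt) : eqH x y -> forall f, Is x f = Is y f.
Proof.
move=> H f; pose W := undup ([seq p.2 | p <- x] ++ [seq p.2 | p <- y]).
rewrite (@Is_uniqW x W) ?(@Is_uniqW y W) ?undup_uniq //.
- by apply: eq_bigr => w _; rewrite H.
- by move=> w wy; rewrite mem_undup mem_cat wy orbT.
- by move=> w wx; rewrite mem_undup mem_cat wx.
Qed.

Lemma coef_Is (x : elt) m : coef x m = Is x (fun w => (w == m)%:R).
Proof.
rewrite /coef /Is big_mkcond; apply: eq_bigr => p _.
by case: eqP => _; rewrite ?mulr1 ?mulr0.
Qed.

Lemma Is_eqH (x y : elt) : (forall f, Is x f = Is y f) -> eqH x y.
Proof. by move=> H m; rewrite !coef_Is H. Qed.

End Alg.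

Lemma uniq_flatten_key (U V : eqType) (s0 : seq U) (f : U -> seq V) (k : V -> U) :
    uniq s0 -> (forall a, a \in s0 -> uniq (f a)) ->
    (forall a y, a \in s0 -> y \in f a -> k y = a) -> uniq (flatten [seq f a | a <- s0]).
Proof.
elim: s0 => [|a s0 IH0] //= /andP [as0 us0] uf kf.
rewrite cat_uniq uf ?inE ?eqxx //= IH0 // ?andbT; first last.
- by move=> b y bs yf; apply: kf => //; rewrite inE bs orbT.
- by move=> b bs; apply: uf; rewrite inE bs orbT.
apply/hasPn => y /flattenP [r /mapP [b bs ->] yb]; apply/negP => ya.
have e1 := kf a y (mem_head _ _) ya.
have e2 : k y = b by apply: kf => //; rewrite inE bs orbT.
by move: as0; rewrite e1 in e2; rewrite e2 bs.
Qed.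

Section Splits.
Variable T : eqType.

Lemma splits_cons (x : T) s :
  splits (x :: s) = flatten [seq (match p with
                    | [::] => [:: [:: [:: x]]]
                    | c :: p' => [:: [:: x] :: p; (x :: c) :: p']
                    end) | p <- splits s].
Proof. by []. Qed.

Lemma splits_mem (u : seq T) cs : cs \in splits u ->
  flatten cs = u /\ all (fun c => c != [::]) cs.
Proof.
elim: u cs => [|x s IH] cs /=; first by rewrite inE => /eqP ->.
case/flattenP => r /mapP [p ps ->{r}]; have [fp ap] := IH _ ps.
case: p ps fp ap => [|c p'] ps fp ap; first by rewrite inE => /eqP -> /=; rewrite -fp.
rewrite !inE => /orP [] /eqP -> /=; rewrite -fp //=; split=> //; by case/andP: ap.
Qed.

Lemma splits_complete (u : seq T) cs : flatten cs = u -> all (fun c => c != [::]) cs ->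
  cs \in splits u.
Proof.
elim: u cs => [|x s IH] [|b cs] //=.
- by case: b => // y b' /=.
case: b => // y b' [<- e] /andP [_ acs]; apply/flattenP.
case: b' e => [|z b''] e /=.
- exists (match cs with [::] => [:: [:: [:: y]]] | c :: p' => [:: [:: y] :: cs; (y :: c) :: p'] end).
    by apply/mapP; exists cs => //; apply: IH.
  by case: cs {e acs} => [|c p']; rewrite !inE eqxx.
- exists [:: [:: y] :: (z :: b'') :: cs; (y :: z :: b'') :: cs].
    by apply/mapP; exists ((z :: b'') :: cs) => //; apply: IH => //=.
  by rewrite !inE eqxx orbT.
Qed.

Lemma splits_uniq (u : seq T) : uniq (splits u).
Proof.
elim: u => [|x s IH] //=.
pose key (r : seq (seq T)) := if r is b :: rest then
  (if behead b == [::] then rest else behead b :: rest) else [::].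
apply: (uniq_flatten_key (k := key) IH).
- move=> p /splits_mem [_ ap]; case: p ap => [|c p'] //= /andP [cn _].
  by rewrite andbT inE; apply/negP => /eqP [e]; move: cn; rewrite -e.
- move=> p r /splits_mem [_ ap]; case: p ap => [|c p'] /=.
    by move=> _; rewrite mem_seq1 => /eqP ->.
  case/andP=> cn _; rewrite !inE => /orP [] /eqP -> //=.
  by rewrite (negbTE cn).
Qed.

Lemma uniq_all_eq1 (s : seq (seq (seq T))) x : uniq s -> x \in s ->
  (forall y, y \in s -> y = x) -> s = [:: x].
Proof.
case: s => [|y s] // /andP [ys us] _ H.
case: s ys us H => [|z s] ys us H; first by rewrite (H y) ?mem_head.
have ey := H y (mem_head _ _); have ez : z = x by apply: H; rewrite !inE eqxx orbT.
by move: ys; rewrite ez ey mem_head.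
Qed.

Lemma splits_small (u : seq T) : u != [::] ->
  [seq cs <- splits u | (size cs < 2)%N] = [:: [:: u]].
Proof.
move=> un; apply: uniq_all_eq1; first by rewrite filter_uniq ?splits_uniq.
- by rewrite mem_filter /= splits_complete //= ?cats0 // un.
move=> y; rewrite mem_filter => /andP [sy /splits_mem [fy ay]].
case: y sy fy ay => [|c [|c' y]] //=; first by move=> _ e; move: un; rewrite -e.
by rewrite cats0 => _ ->.
Qed.

Lemma sumn_pred (cs : seq (seq T)) : all (fun c => c != [::]) cs ->
  (sumn [seq (size c).-1 | c <- cs] + size cs = size (flatten cs))%N.
Proof.
elim: cs => [|c cs IH] //= /andP [cn acs]; rewrite size_cat -IH //.
by case: c cn => // y c _ /=; rewrite addnS addSn addnA.
Qed.

Lemma size_block (cs : seq (seq T)) c : all (fun c => c != [::]) cs -> c \in cs ->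
  (size c + (size cs).-1 <= size (flatten cs))%N.
Proof.
elim: cs => [|d cs IH] //= /andP [dn acs]; rewrite inE size_cat => /orP [/eqP ->|ccs].
  rewrite leq_add2l; have := sumn_pred acs; lia.
have := IH acs ccs; case: d dn => // y d _ /=.
case: cs {IH acs} ccs => //= c' cs _; lia.
Qed.

End Splits.

Section Deg.
Variables (N : nat) (K : comNzRingType).
Local Notation elt := (elt N K).
Local Notation mon := (mon N).
Local Notation gen := (gen N).

Lemma allwords_mem q (w : word N) : (w \in allwords N q) = (size w == q).
Proof.
elim: q w => [|q IH] w; first by case: w.
apply/allpairsP/idP => [[[a b] [_ /= bq ->]]|] /=; first by rewrite eqSS -IH.
by case: w => [|j w] //= sw; exists (j, w); rewrite mem_enum IH.
Qed.

Lemma allwords_uniq q : uniq (allwords N q).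
Proof.
elim: q => [|q IH] //=; apply: allpairs_uniq => //; first exact: enum_uniq.
by move=> [a b] [c d] _ _ /= [-> ->].
Qed.

Lemma sum_allwords1 (F : word N -> K) :
  \sum_(v <- allwords N 1) F v = \sum_(j <- enum 'I_N) F [:: j].
Proof. rewrite big_allpairs_dep; apply: eq_bigr => j _; by rewrite big_seq1. Qed.

Definition deg (m : mon) : nat := sumn [seq (size (val g).2).-1 | g <- m].

Lemma deg_cat (a b : mon) : deg (a ++ b) = (deg a + deg b)%N.
Proof. by rewrite /deg map_cat sumn_cat. Qed.

Lemma deg1 (g : gen) : deg [:: g] = (size (val g).2).-1.
Proof. by rewrite /deg /= addn0. Qed.

Lemma Yel_gen (g : gen) : Yel K (val g).1 (val g).2 = [:: (1, [:: g])].
Proof.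
rewrite /Yel; case: insubP => [g' _ e|].
  by congr [:: (_, [:: _])]; apply: val_inj; rewrite e -surjective_pairing.
by rewrite -surjective_pairing (valP g).
Qed.

Lemma Yel_big i (u : word N) (H : (1 < size u)%N) :
  Yel K i u = [:: (1, [:: (Sub (i, u) H : gen)])].
Proof. by have := Yel_gen (Sub (i, u) H); rewrite SubK. Qed.

Lemma Yel_single i j : Yel K i [:: j] = if j == i then oneH N K else zeroH N K.
Proof. by rewrite /Yel insubN //= eqseq_cons andbT. Qed.

Lemma Yel_nil i : Yel K i [::] = zeroH N K.
Proof. by rewrite /Yel insubN. Qed.

Lemma Yel_mem i (w : word N) a : a \in [seq p.2 | p <- Yel K i w] ->
  deg a = (size w).-1 /\ rev a = a.
Proof.
rewrite /Yel; case: insubP => [g _ e|].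
  by rewrite inE => /eqP -> /=; rewrite deg1 e.
case: ifP => [/eqP -> _|]; last by [].
by rewrite inE => /eqP ->.
Qed.

Lemma mem_mulH (x y : elt) c : c \in [seq p.2 | p <- mulH x y] ->
  exists a b, [/\ a \in [seq p.2 | p <- x], b \in [seq p.2 | p <- y] & c = a ++ b].
Proof.
case/mapP => p /allpairsP [[a b] [ax bx ->]] ->{c p} /=.
by exists a.2, b.2; split=> //; apply: map_f.
Qed.

Lemma prodYel_deg (l : seq ('I_N * word N)) a :
  a \in [seq p.2 | p <- prodH [seq Yel K vc.1 vc.2 | vc <- l]] ->
  deg a = sumn [seq (size vc.2).-1 | vc <- l].
Proof.
elim: l a => [|vc l IH] a /=; first by rewrite inE => /eqP ->.
case/mem_mulH => b [c [/Yel_mem [db _] /IH dc ->]].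
by rewrite deg_cat db dc.
Qed.

Lemma sumn_zip (v : word N) (cs : seq (word N)) : size v = size cs ->
  sumn [seq (size vc.2).-1 | vc <- zip v cs] = sumn [seq (size c).-1 | c <- cs].
Proof. by elim: v cs => [|j v IH] [|c cs] //= [/IH ->]. Qed.

Lemma Is_Delta_gen (g : gen) f :
  Is (Delta_gen K g) f = \sum_(cs <- splits (val g).2) \sum_(v <- allwords N (size cs))
     Is (prodH [seq Yel K vc.1 vc.2 | vc <- zip v cs])
        (fun a => Is (Yel K (val g).1 v) (fun b => f (a, b))).
Proof.
rewrite /Delta_gen Is_flatten; apply: eq_bigr => cs _.
by rewrite Is_flatten; apply: eq_bigr => v _; rewrite Is_tens.
Qed.

Lemma Delta_cons (g : gen) (m : mon) : Delta K (g :: m) = mul2 (Delta_gen K g) (Delta K m).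
Proof. by []. Qed.

Lemma Delta_nil : Delta K [::] = one2 N K.
Proof. by []. Qed.

Definition UB (x : elt2 N K) (d : nat) := forall f,
  Is x f = Is x (fun p => if (deg p.1 <= d)%N then f p else 0).

Lemma gen_size (g : gen) : (1 < size (val g).2)%N.
Proof. exact: valP g. Qed.

Lemma UB_gen (g : gen) : UB (Delta_gen K g) (deg [:: g]).
Proof.
move=> f; rewrite !Is_Delta_gen; apply: eq_big_seq => cs /splits_mem [fc ac].
apply: eq_big_seq => v; rewrite allwords_mem => /eqP sv.
apply: Is_ext_in => a /prodYel_deg; rewrite sumn_zip // => da.
have := sumn_pred ac; rewrite fc -da => e; rewrite /= deg1.
have -> : (deg a <= (size (val g).2).-1)%N.
  have cs0 : (0 < size cs)%N by move: (gen_size g); rewrite -fc; case: (cs).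
  by rewrite -e; move: cs0; case: (size cs) => // n _; rewrite addnS leq_addr.
by [].
Qed.

Lemma UB_Delta (m : mon) : UB (Delta K m) (deg m).
Proof.
elim: m => [|g m IH] f.
  by rewrite Delta_nil !Is_one2.
rewrite Delta_cons !Is_mul2 (UB_gen g) [in RHS](UB_gen g).
apply: Is_ext => a; case: ifP => // ha.
rewrite IH [in RHS]IH; apply: Is_ext => b; case: ifP => // hb.
by rewrite /= deg_cat -cat1s deg_cat leq_add.
Qed.

Lemma Top_gen (g : gen) f :
  Is (Delta_gen K g) (fun p => if (deg [:: g] <= deg p.1)%N then f p else 0) = f ([:: g], [::]).
Proof.
rewrite Is_Delta_gen.
have un : (val g).2 != [::] by case: (val g).2 (gen_size g).
rewrite (bigID (fun cs => (size cs < 2)%N)) /= -big_filter splits_small // big_seq1.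
rewrite [X in _ + X]big1_seq ?addr0; last first.
  move=> cs /andP [ncs /splits_mem [fc ac]]; rewrite big_seq big1 // => v.
  rewrite allwords_mem => /eqP sv; rewrite -[RHS](Is_zero (prodH [seq Yel K vc.1 vc.2 | vc <- zip v cs])).
  apply: Is_ext_in => a /prodYel_deg; rewrite sumn_zip // => da.
  have := sumn_pred ac; rewrite fc deg1 -da => e.
  have gs := gen_size g.
  rewrite /=; move: e; move: (size (sval g).2) => n e.
  have -> : (n.-1 <= deg a)%N = false.
    by rewrite -e; move: ncs; case: (size cs) => [|[|k]] // _; lia.
  exact: Is_zero.
rewrite sum_allwords1 /= (bigD1_seq (val g).1) ?mem_enum ?enum_uniq //=.
rewrite big1_seq ?addr0.
  by rewrite Is_mulH Yel_single eqxx (Yel_gen g) Is_single Is_oneH Is_oneH /= leqnn !mul1r.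
move=> j /andP [ne _]; rewrite Is_mulH Yel_single (negbTE ne).
rewrite -[RHS](Is_zero (Yel K j (sval g).2)); apply: Is_ext => a.
by rewrite Is_oneH Is_zeroH.
Qed.

Lemma degC (g : gen) (m : mon) : deg (g :: m) = (deg [:: g] + deg m)%N.
Proof. by rewrite -deg_cat. Qed.

Lemma Top_Delta (m : mon) f :
  Is (Delta K m) (fun p => if (deg m <= deg p.1)%N then f p else 0) = f (m, [::]).
Proof.
elim: m f => [|g m IH] f; first by rewrite Delta_nil Is_one2.
rewrite Delta_cons Is_mul2.
transitivity (Is (Delta_gen K g) (fun a => if (deg [:: g] <= deg a.1)%N then
   Is (Delta K m) (fun b => if (deg m <= deg b.1)%N then f (a.1 ++ b.1, a.2 ++ b.2) else 0) else 0)).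
  rewrite (UB_gen g) [RHS](UB_gen g); apply: Is_ext => a; case: ifP => // ha.
  case: ifP => hb.
    rewrite (UB_Delta m) [RHS](UB_Delta m); apply: Is_ext => b; case: ifP => // hb'.
    rewrite /= deg_cat degC.
    have -> : (deg [:: g] + deg m <= deg a.1 + deg b.1)%N = (deg m <= deg b.1)%N.
      by apply/idP/idP; lia.
    by [].
  rewrite (UB_Delta m) -[RHS](Is_zero (Delta K m)); apply: Is_ext => b; case: ifP => // hb'.
  rewrite /= deg_cat degC.
  have -> : (deg [:: g] + deg m <= deg a.1 + deg b.1)%N = false by apply/idP; lia.
  by [].
rewrite -[RHS](Top_gen g (fun a => f (a.1 ++ m, a.2 ++ [::]))).
by apply: Is_ext => a; case: ifP => // _; rewrite IH.
Qed.

Definition LS (S : mon -> elt) (m : mon) (h : mon -> K) :=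
  Is (Delta K m) (fun p => Is (S p.1) (fun w => h (w ++ p.2))).

Lemma LS_split (T : mon -> elt) m h : LS T m h =
   Is (T m) h + Is (Delta K m) (fun p => if (deg p.1 < deg m)%N then Is (T p.1) (fun w => h (w ++ p.2)) else 0).
Proof.
have -> : Is (T m) h = Is (T m) (fun w => h (w ++ [::])) by apply: Is_ext => w; rewrite cats0.
rewrite /LS.
rewrite -[X in X + _](Top_Delta m (fun p => Is (T p.1) (fun w => h (w ++ p.2)))) /=.
rewrite -Is_add; apply: Is_ext => p.
by case: leqP => _; rewrite ?addr0 ?add0r.
Qed.

Lemma LS_unique (S S' : mon -> elt) :
  (forall m h, LS S m h = epsH K m * h [::]) ->
  (forall m h, LS S' m h = epsH K m * h [::]) ->
  forall m h, Is (S m) h = Is (S' m) h.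
Proof.
move=> HS HS' m; move: {2}(deg m) (leqnn (deg m)) => n; elim: n m => [|n IH] m dm h.
all: have : LS S m h = LS S' m h by rewrite HS HS'.
all: rewrite !LS_split => e.
- have z : forall T : mon -> elt, Is (Delta K m) (fun p => if (deg p.1 < deg m)%N
      then Is (T p.1) (fun w => h (w ++ p.2)) else 0) = 0.
    move=> T; rewrite -[RHS](Is_zero (Delta K m)); apply: Is_ext => p; case: ifP => //; lia.
  by move: e; rewrite !z !addr0.
- have r : Is (Delta K m) (fun p => if (deg p.1 < deg m)%N
      then Is (S p.1) (fun w => h (w ++ p.2)) else 0) =
    Is (Delta K m) (fun p => if (deg p.1 < deg m)%N
      then Is (S' p.1) (fun w => h (w ++ p.2)) else 0).
    by apply: Is_ext => p; case: ifP => // lt; rewrite IH //; lia.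
  by move: e; rewrite r; move/addIr.
Qed.

End Deg.

Section TreeEq.
Variable N : nat.

Definition ctree_ind2 (P : ctree N -> Prop)
  (H : forall c ts, List.Forall P ts -> P (CNode c ts)) : forall t, P t :=
  fix F t := match t with
  | CNode c ts => H c ts ((fix G l : List.Forall P l :=
       match l with
       | [::] => List.Forall_nil P
       | x :: l' => List.Forall_cons x (F x) (G l')
       end) ts)
  end.

Fixpoint enc (t : ctree N) : GenTree.tree 'I_N :=
  let: CNode c ts := t in GenTree.Node 0 (GenTree.Leaf c :: map enc ts).

Fixpoint dec (t : GenTree.tree 'I_N) : option (ctree N) :=
  match t with
  | GenTree.Node _ (GenTree.Leaf c :: l) => Some (CNode c (pmap dec l))
  | _ => None
  end.

Lemma encK : pcancel enc dec.
Proof.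
elim/ctree_ind2 => c ts H /=; congr (Some (CNode c _)).
by elim: H => //= t l -> _ ->.
Qed.

HB.instance Definition _ := Equality.copy (ctree N) (pcan_type encK).

End TreeEq.

Fixpoint prodseq (T : Type) (Ls : seq (seq T)) : seq (seq T) :=
  if Ls is L :: Ls' then [seq t :: ts | t <- L, ts <- prodseq Ls'] else [:: [::]].

Lemma prodseq_mem (T : eqType) (A : Type) (f : A -> seq T) (l : seq A) ts :
  (ts \in prodseq [seq f x | x <- l]) = all2 (fun t x => t \in f x) ts l.
Proof.
elim: l ts => [|x l IH] [|t ts] //=.
- by apply/allpairsP => -[[a b] [_ _ /=]].
- apply/allpairsP/andP => [[[a b] [/= ha hb [-> ->]]]|[ht hts]].
    by rewrite -IH.
  by exists (t, ts); rewrite /= ht IH.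
Qed.

Lemma prodseq_uniq (T : eqType) (A : Type) (f : A -> seq T) (l : seq A) :
  (forall x, uniq (f x)) -> uniq (prodseq [seq f x | x <- l]).
Proof.
move=> uf; elim: l => [|x l IH] //=; apply: allpairs_uniq => //.
by move=> [a b] [c d] _ _ /= [-> ->].
Qed.

Lemma all2_mono (S T : Type) (r1 r2 : S -> T -> bool) s t :
  (forall a b, r1 a b -> r2 a b) -> all2 r1 s t -> all2 r2 s t.
Proof.
move=> H; elim: s t => [|a s IH] [|b t] //= /andP [h1 h2].
by rewrite H // IH.
Qed.

Section Trees.
Variable N : nat.
Local Notation ctree := (ctree N).
Local Notation word := (word N).
Local Notation color := (@color N).
Local Notation leaves := (@leaves N).
Local Notation reduced := (@reduced N).

Definition children (t : ctree) : seq ctree := let: CNode _ ts := t in ts.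

Fixpoint trees (n : nat) (i : 'I_N) (u : word) : seq ctree :=
  if n is n'.+1 then
    (if u == [:: i] then [:: CNode i [::]] else [::]) ++
    flatten [seq flatten [seq [seq CNode i ts | ts <- prodseq [seq trees n' vc.1 vc.2 | vc <- zip v cs]]
                         | v <- allwords N (size cs)]
            | cs <- [seq cs <- splits u | (2 <= size cs)%N]]
  else [::].

Lemma leaves_nonempty (t : ctree) : leaves t != [::].
Proof.
elim/ctree_ind2: t => c ts H /=; case: ts H => // t ts H.
inversion H; subst => /=.
by case: (leaves t) H2.
Qed.

Lemma in_zip2 (v : word) (cs : seq word) vc : vc \in zip v cs -> vc.2 \in cs.
Proof.
elim: v cs => [|j v IH] [|c cs] //=; rewrite inE => /orP [/eqP -> /=|/IH].
  by rewrite mem_head.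
by rewrite inE orbC => ->.
Qed.

Lemma all2_zip_map (ts : seq ctree) (v : word) (cs : seq word) :
  size v = size cs ->
  all2 (fun t vc => [&& color t == vc.1, leaves t == vc.2 & reduced t]) ts (zip v cs) ->
  [/\ map color ts = v, map leaves ts = cs & all reduced ts].
Proof.
elim: ts v cs => [|t ts IH] [|j v] [|c cs] //= [e] /andP [/and3P [/eqP -> /eqP -> ->] h].
by have [-> -> ->] := IH _ _ e h.
Qed.

Lemma all2_zip_self (ts : seq ctree) (r : ctree -> 'I_N * word -> bool) :
  (forall t, t \in ts -> r t (color t, leaves t)) ->
  all2 r ts (zip (map color ts) (map leaves ts)).
Proof.
elim: ts => [|t ts IH] //= H; rewrite H ?mem_head // IH // => t' h.
by apply: H; rewrite inE h orbT.
Qed.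

Lemma trees_B_mem n i (u : word) T :
  T \in flatten [seq flatten [seq [seq CNode i ts | ts <- prodseq [seq trees n vc.1 vc.2 | vc <- zip v cs]]
                         | v <- allwords N (size cs)]
            | cs <- [seq cs <- splits u | (2 <= size cs)%N]] ->
  exists cs v ts, [/\ cs \in splits u, (2 <= size cs)%N, size v = size cs,
     all2 (fun t vc => t \in trees n vc.1 vc.2) ts (zip v cs) & T = CNode i ts].
Proof.
case/flattenP => r /mapP [cs]; rewrite mem_filter => /andP [c2 cs_in] ->{r}.
case/flattenP => r /mapP [v]; rewrite allwords_mem => /eqP sv ->{r}.
case/mapP => ts; rewrite prodseq_mem => h ->.
by exists cs, v, ts.
Qed.

Lemma trees_fwd n i (u : word) T : T \in trees n i u ->
  [/\ reduced T, color T = i & leaves T = u].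
Proof.
elim: n i u T => [|n IH] i u T //=; rewrite mem_cat => /orP [].
  by case: ifP => // /eqP -> ; rewrite inE => /eqP ->.
case/trees_B_mem => cs [v [ts [cs_in c2 sv h ->]]].
have [fc ac] := splits_mem cs_in.
have h' := all2_mono (r2 := fun t vc => [&& color t == vc.1, leaves t == vc.2 & reduced t])
   (fun t vc (H : t \in trees n vc.1 vc.2) => let: And3 a b c := IH _ _ _ H in
      introT and3P (And3 (introT eqP b) (introT eqP c) a)) h.
have [ec el ar] := all2_zip_map sv h'.
have sts : size ts = size cs by rewrite -el size_map.
case: ts h h' ec el ar sts => [|t ts] h h' ec el ar sts; first by move: c2; rewrite -sts.
have s2 : (1 < size (t :: ts))%N by rewrite sts.
split=> //=; first by rewrite s2. by rewrite -fc -el.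
Qed.

Lemma trees_bwd n i (u : word) T : (size u <= n)%N -> reduced T -> color T = i -> leaves T = u ->
  T \in trees n i u.
Proof.
elim: n i u T => [|n IH] i u [c ts] su rT cT lT.
  by move: su (leaves_nonempty (CNode c ts)); rewrite lT; case: u {lT}.
rewrite /= in cT; subst c; rewrite /= mem_cat.
case: ts rT lT => [|t0 ts0] rT lT.
  by rewrite /= in lT; rewrite -lT eqxx mem_head.
set ts := t0 :: ts0 in rT lT *.
have s2 : (1 < size ts)%N by case/andP: rT.
have ar : all reduced ts by case/andP: rT.
have lT' : flatten [seq leaves t | t <- ts] = u by [].
have ac : all (fun c => c != [::]) [seq leaves t | t <- ts].
  by apply/allP => c /mapP [t _ ->]; apply: leaves_nonempty.
apply/orP; right; apply/flattenP.
exists (flatten [seq [seq CNode i ts' | ts' <- prodseq [seq trees n vc.1 vc.2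
                     | vc <- zip v [seq leaves t | t <- ts]]]
               | v <- allwords N (size [seq leaves t | t <- ts])]).
  apply/mapP; exists [seq leaves t | t <- ts] => //.
  by rewrite mem_filter size_map s2 splits_complete.
apply/flattenP; exists [seq CNode i ts' | ts' <- prodseq [seq trees n vc.1 vc.2
                     | vc <- zip [seq color t | t <- ts] [seq leaves t | t <- ts]]].
  by apply/mapP; exists [seq color t | t <- ts] => //; rewrite allwords_mem !size_map.
apply: map_f; rewrite prodseq_mem; apply: all2_zip_self => t tin.
apply: IH => //=; last exact: (allP ar t tin).
have := size_block ac (map_f leaves tin); rewrite lT' size_map.
move: su s2; rewrite /ts /=; move: (size ts0) (size u) (size (leaves t)) => a b c; lia.
Qed.

Lemma trees_fuel n m i (u : word) : (size u <= n)%N -> (size u <= m)%N ->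
  trees n i u = trees m i u.
Proof.
elim: n m i u => [|n IH] [|m] i u //.
- by case: u.
- by case: u.
move=> sn sm /=; congr (_ ++ flatten _); apply/eq_in_map => cs.
rewrite mem_filter => /andP [c2 /splits_mem [fc ac]]; congr flatten.
apply: eq_map => v; congr (map _ (prodseq _)); apply/eq_in_map => vc /in_zip2 hc.
have := size_block ac hc; rewrite fc => hb.
apply: IH; move: c2 hb sn sm; move: (size cs) (size vc.2) (size u) => a b c; lia.
Qed.

Lemma trees_uniq n i (u : word) : uniq (trees n i u).
Proof.
elim: n i u => [|n IH] i u //=.
rewrite cat_uniq; apply/and3P; split.
- by case: ifP.
- apply/hasPn => T /trees_B_mem [cs [v [ts [_ c2 sv h ->]]]].
  case: ifP => // _; rewrite inE; apply/negP => /eqP [e].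
  move: h; rewrite e; case: v cs c2 sv {e} => [|j v] [|c cs] //.
apply: (uniq_flatten_key (k := fun T => map leaves (children T))).
- by rewrite filter_uniq // splits_uniq.
- move=> cs; rewrite mem_filter => /andP [c2 _].
  apply: (uniq_flatten_key (k := fun T => map color (children T))); first exact: allwords_uniq.
    move=> v _; rewrite map_inj_uniq; last by move=> a b [].
    by apply: prodseq_uniq.
  move=> v T; rewrite allwords_mem => /eqP sv /mapP [ts]; rewrite prodseq_mem => h -> /=.
  have h' := all2_mono (r2 := fun t vc => [&& color t == vc.1, leaves t == vc.2 & reduced t])
   (fun t vc (H : t \in trees n vc.1 vc.2) => let: And3 a b c := trees_fwd H in
      introT and3P (And3 (introT eqP b) (introT eqP c) a)) h.
  by have [] := all2_zip_map sv h'.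
- move=> cs T; rewrite mem_filter => /andP [c2 _].
  case/flattenP => r /mapP [v]; rewrite allwords_mem => /eqP sv ->{r}.
  case/mapP => ts; rewrite prodseq_mem => h -> /=.
  have h' := all2_mono (r2 := fun t vc => [&& color t == vc.1, leaves t == vc.2 & reduced t])
   (fun t vc (H : t \in trees n vc.1 vc.2) => let: And3 a b c := trees_fwd H in
      introT and3P (And3 (introT eqP b) (introT eqP c) a)) h.
  by have [] := all2_zip_map sv h'.
Qed.

End Trees.

Section Main.
Variables (N : nat) (K : comNzRingType).
Local Notation elt := (elt N K).
Local Notation mon := (mon N).
Local Notation gen := (gen N).
Local Notation word := (word N).
Local Notation ctree := (ctree N).
Local Notation color := (@color N).
Local Notation leaves := (@leaves N).
Local Notation nvert := (@nvert N).
Local Notation lam := (@lambda_dr N K).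

Definition Hsig (T : ctree) : elt := scaleH ((-1) ^+ nvert T) (tH (lam T)).

Definition F (i : 'I_N) (u : word) : elt := flatten [seq Hsig T | T <- trees (size u) i u].

Definition S' (m : mon) : elt := prodH (rev [seq F (val g).1 (val g).2 | g <- m]).

Lemma Is_Hsig_prod (ts : seq ctree) k :
  Is (prodH (rev (map Hsig ts))) k =
  (-1) ^+ (sumn (map nvert ts)) * Is (prodH (map lam ts)) (fun a => k (rev a)).
Proof.
elim: ts k => [|t ts IH] k /=; first by rewrite !Is_prodH_nil expr0 mul1r.
rewrite rev_cons Is_prodH_rcons IH Is_prodH_cons addnC exprD -mulrA; congr (_ * _).
rewrite Is_swap /Hsig Is_scaleH Is_tH; congr (_ * _); apply: Is_ext => b.
by apply: Is_ext => a; rewrite rev_cat.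
Qed.

Lemma Is_Hsig_node i (ts : seq ctree) h : ts != [::] ->
  Is (Hsig (CNode i ts)) h =
  - Is (prodH (rev (map Hsig ts))) (fun a => Is (Yel K i (map color ts)) (fun b => h (a ++ b))).
Proof.
case: ts => // t ts _; rewrite Is_Hsig_prod /Hsig Is_scaleH Is_tH /= Is_mulH.
rewrite exprS mulN1r mulNr; congr (- _); congr (_ * _).
rewrite [RHS]Is_swap; apply: Is_ext_in => b /Yel_mem [_ rb].
by apply: Is_ext => a; rewrite rev_cat rb.
Qed.

Lemma Is_prodseq (Ls : seq (seq ctree)) (H : ctree -> elt) k :
  \sum_(ts <- prodseq Ls) Is (prodH (rev (map H ts))) k =
  Is (prodH (rev [seq flatten [seq H t | t <- L] | L <- Ls])) k.
Proof.
elim: Ls k => [|L Ls IH] k /=; first by rewrite big_seq1.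
rewrite big_allpairs_dep /= rev_cons Is_prodH_rcons.
transitivity (\sum_(t <- L) Is (prodH (rev [seq flatten [seq H t0 | t0 <- L0] | L0 <- Ls]))
   (fun a => Is (H t) (fun b => k (a ++ b)))).
  by apply: eq_bigr => t _; rewrite -IH; apply: eq_bigr => ts _; rewrite rev_cons Is_prodH_rcons.
rewrite -Is_sum; apply: Is_ext => a; by rewrite Is_flatten.
Qed.

Lemma Yel_size2 i (v : word) : (2 <= size v)%N -> exists g : gen, Yel K i v = [:: (1, [:: g])].
Proof. by move=> H; exists (Sub (i, v) H); rewrite Yel_big. Qed.

Lemma F_rec i (u : word) h : (2 <= size u)%N ->
  Is (F i u) h = - \sum_(cs <- splits u | (2 <= size cs)%N) \sum_(v <- allwords N (size cs))
     Is (prodH (rev [seq F vc.1 vc.2 | vc <- zip v cs]))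
        (fun a => Is (Yel K i v) (fun b => h (a ++ b))).
Proof.
move=> su; rewrite /F; case E: (size u) su => [|n] // su.
rewrite /= Is_flatten big_cat /=.
have -> : (u == [:: i]) = false by apply/eqP => e; move: E su; rewrite e => -[<-].
rewrite big_nil add0r big_flatten /= big_map big_filter -sumrN.
rewrite big_seq_cond [RHS]big_seq_cond; apply: eq_bigr => cs /andP [/splits_mem [fc ac] c2].
rewrite big_allpairs_dep /= -sumrN; apply: eq_big_seq => v; rewrite allwords_mem => /eqP sv.
rewrite big_seq.
under eq_bigr => ts.
  rewrite prodseq_mem => h2.
  have [ec el _] : [/\ map color ts = v, map leaves ts = cs & all (@reduced N) ts].
    apply: all2_zip_map sv _; apply: all2_mono h2 => t vc /trees_fwd [a b c].
    by rewrite a b c !eqxx.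
  have tsn : ts != [::] by move: c2; rewrite -el; case: (ts).
  rewrite Is_Hsig_node // ec; over.
rewrite /= sumrN -big_seq Is_prodseq; congr (- _).
rewrite -map_comp; congr (Is (prodH (rev _)) _); apply/eq_in_map => vc /in_zip2 hc /=.
have := size_block ac hc; rewrite fc E => hb.
rewrite (@trees_fuel _ n (size vc.2)) //.
by move: c2 hb; move: (size cs) (size vc.2) => x y; lia.
Qed.

Lemma F_single j x k : Is (F j [:: x]) k = if x == j then k [::] else 0.
Proof.
rewrite /F /= eqseq_cons andbT cats0; case: ifP => _ /=.
  by rewrite Is_cons Is_nil addr0 expr0 !mul1r.
by rewrite Is_nil.
Qed.

Lemma S'_cat (a b : mon) k : Is (S' (a ++ b)) k = Is (S' b) (fun c => Is (S' a) (fun d => k (c ++ d))).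
Proof. by rewrite /S' map_cat rev_cat Is_prodH_cat. Qed.

Lemma S'_anti (xs : seq elt) k :
  Is (prodH xs) (fun a => Is (S' a) k) = Is (prodH (rev (map (linext S') xs))) k.
Proof.
elim: xs k => [|x xs IH] k /=; first by rewrite !Is_oneH.
rewrite Is_mulH rev_cons Is_prodH_rcons.
transitivity (Is x (fun a => Is (prodH (rev [seq linext S' i | i <- xs]))
   (fun c => Is (S' a) (fun d => k (c ++ d))))).
  by apply: Is_ext => a; rewrite -IH; apply: Is_ext => b; rewrite S'_cat.
rewrite Is_swap; apply: Is_ext => c; by rewrite Is_linext.
Qed.

Lemma linext_Yel j (w : word) k : w != [::] -> Is (linext S' (Yel K j w)) k = Is (F j w) k.
Proof.
move=> wn; rewrite Is_linext.
case: w wn => [|x [|y w]] // _.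
  rewrite Yel_single F_single; case: eqP => _; last exact: Is_zeroH.
  by rewrite Is_oneH /S' /= Is_prodH_nil.
rewrite Yel_big // Is_single mul1r /S' /= Is_mulH.
by apply: Is_ext => a; rewrite Is_oneH cats0.
Qed.

Lemma prodH_ext (A : eqType) (l : seq A) (f1 f2 : A -> elt) :
  (forall x, x \in l -> forall k, Is (f1 x) k = Is (f2 x) k) ->
  forall k, Is (prodH (rev (map f1 l))) k = Is (prodH (rev (map f2 l))) k.
Proof.
elim: l => [|x l IH] H k //=; rewrite !rev_cons !Is_prodH_rcons IH.
  by apply: Is_ext => a; apply: H; rewrite mem_head.
by move=> y yl; apply: H; rewrite inE yl orbT.
Qed.

Lemma LSgen (g : gen) h :
  Is (Delta_gen K g) (fun p => Is (S' p.1) (fun w => h (w ++ p.2))) = 0.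
Proof.
move: g => [[i u] su]; rewrite Is_Delta_gen /=.
transitivity (\sum_(cs <- splits u) \sum_(v <- allwords N (size cs))
  Is (Yel K i v) (fun b => Is (prodH (rev [seq F vc.1 vc.2 | vc <- zip v cs])) (fun w => h (w ++ b)))).
  apply: eq_big_seq => cs /splits_mem [fc ac]; apply: eq_bigr => v _.
  rewrite Is_swap; apply: Is_ext => b.
  rewrite S'_anti -map_comp; apply: prodH_ext => vc /in_zip2 hc k.
  by apply: linext_Yel; apply: (allP ac).
have un : u != [::] by case: (u) su.
rewrite (bigID (fun cs => (size cs < 2)%N)) /= -big_filter splits_small // big_seq1 sum_allwords1 /=.
rewrite (bigD1_seq i) ?mem_enum ?enum_uniq //= big1_seq ?addr0; last first.
  move=> j /andP [ne _]; rewrite Yel_single (negbTE ne); exact: Is_zeroH.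
rewrite Yel_single eqxx Is_oneH Is_mulH.
have -> : Is (F i u) (fun a => Is (oneH N K) (fun b => h ((a ++ b) ++ [::]))) = Is (F i u) h.
  by apply: Is_ext => a; rewrite Is_oneH !cats0.
rewrite (F_rec _ h su) (eq_bigl (fun cs => (2 <= size cs)%N)); last by move=> cs; rewrite -leqNgt.
rewrite addrC; apply/eqP; rewrite subr_eq0; apply/eqP.
apply: eq_bigr => cs _; apply: eq_bigr => v _; exact: Is_swap.
Qed.

Lemma LS_S' m h : LS S' m h = epsH K m * h [::].
Proof.
case: m => [|g m]; rewrite /LS.
  by rewrite Delta_nil Is_one2 /= mul1r /S' /= Is_oneH.
rewrite Delta_cons Is_mul2 /= mul0r.
transitivity (Is (Delta K m) (fun b => Is (S' b.1) (fun c => Is (Delta_gen K g)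
   (fun a => Is (S' a.1) (fun d => (fun e => h (c ++ e ++ b.2)) (d ++ a.2)))))).
  rewrite Is_swap; apply: Is_ext => b; rewrite Is_swap; apply: Is_ext => a.
  rewrite S'_cat; apply: Is_ext => c; apply: Is_ext => d.
  by rewrite !catA.
rewrite -[RHS](Is_zero (Delta K m)); apply: Is_ext => b.
rewrite -[RHS](Is_zero (S' b.1)); apply: Is_ext => c.
exact: (LSgen g (fun e => h (c ++ e ++ b.2))).
Qed.

End Main.
Section Final.
Variables (N : nat) (K : comNzRingType).

Lemma antipode_LS (S : mon N -> elt N K) : is_antipode S ->
  forall m h, LS S m h = epsH K m * h [::].
Proof.
move=> HS m h; have e := eqH_Is (HS m).1 h.
rewrite Is_scaleH Is_oneH in e; rewrite -e Is_flatten /LS.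
apply: eq_bigr => p _; rewrite Is_scaleH Is_mulH; congr (_ * _).
by apply: Is_ext => w; rewrite Is_single mul1r.
Qed.

Lemma InE (T : eqType) (x : T) s : List.In x s <-> x \in s.
Proof.
elim: s => [|y s IH] //=; rewrite inE; split.
  by case=> [->|/IH ->]; rewrite ?eqxx ?orbT.
by case/orP => [/eqP ->|/IH]; [left|right].
Qed.

Lemma NoDup_uniq (T : eqType) (s : seq T) : List.NoDup s <-> uniq s.
Proof.
elim: s => [|x s IH] /=; first by split=> // _; constructor.
split.
  move=> H; inversion H; subst; apply/andP; split; last by apply/IH.
  by apply/negP => /InE.
case/andP => xs us; constructor; last by apply/IH.
by move/InE; apply/negP.
Qed.

Lemma main_gen (i : 'I_N) (u : word N) (S : mon N -> elt N K) :
  (2 <= size u)%N -> is_antipode S ->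
  (exists ts : seq (ctree N), enumRT i u ts) /\
  (forall ts : seq (ctree N), enumRT i u ts ->
     eqH (antipodeR S (@Yel N K i u)) (@tree_sum N K ts)).
Proof.
move=> su HS.
pose T0 := trees (size u) i u.
have memT : forall T, T \in T0 <-> inRT i u T.
  move=> T; split; first by case/trees_fwd => a b c; split.
  by case=> [a [b c]]; apply: trees_bwd.
split.
  exists T0; split; first by apply/NoDup_uniq; apply: trees_uniq.
  by move=> T; rewrite InE.
move=> ts [nd H]; apply: Is_eqH => h.
have pe : perm_eq ts T0.
  apply: uniq_perm; [by apply/NoDup_uniq | exact: trees_uniq |].
  by move=> T; apply/idP/idP => [/InE/H/memT | /memT/H/InE].
rewrite /tree_sum Is_flatten (perm_big _ pe) -Is_flatten.
rewrite /antipodeR Is_tH Is_linext (Yel_big K i su) /tH /= Is_single mul1r.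
have U := LS_unique (antipode_LS HS) (@LS_S' N K).
rewrite U /S' /= Is_mulH.
transitivity (Is (F K i u) (fun a => h (rev a))).
  by apply: Is_ext => a; rewrite Is_oneH !cats0.
rewrite /F Is_flatten Is_flatten; apply: eq_bigr => T _.
rewrite /Hsig !Is_scaleH Is_tH; congr (_ * _); apply: Is_ext => a.
by rewrite revK.
Qed.

End Final.

Unset Implicit Arguments.

Theorem corollary4 (R : realType) (N : nat) (i : 'I_N) (u : word N)
    (S : mon N -> elt N R[i]) :
  (0 < N)%N -> (2 <= size u)%N ->
  is_antipode S ->
  (exists ts : seq (ctree N), enumRT i u ts) /\
  (forall ts : seq (ctree N), enumRT i u ts ->
     eqH (antipodeR S (@Yel N R[i] i u)) (@tree_sum N R[i] ts)).
Proof.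
move=> _ su HS; exact: main_gen su HS.
Qed.
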